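(* Let $G=(V,E)$ be a Generalized Bartlett graph. If $V'\subset V$ and $G'=(V',E')$ is the induced subgraph of $G$ on $V'$, then $G'$ is also a Generalized Bartlett graph.
   Context: For a graph $(V,E)$ with $|V|=p$ and ordering $\sigma:V\to\{1,\dots,p\}$, set $E^\sigma_0=E$, $E^\sigma_i=E^\sigma_{i-1}\cup\{\{u,v\}:u\ne v,\sigma(u)>i,\sigma(v)>i,\{u,\sigma^{-1}(i)\},\{v,\sigma^{-1}(i)\}\in E^\sigma_{i-1}\}$ for $i=1,\dots,p-2$, and $D^\sigma(E)=E^\sigma_{p-2}$. The graph is Generalized Bartlett if there is an ordering $\sigma$ such that there are no $u,v,w$ with $\{u,v\},\{v,w\},\{u,w\}\notin E$ but all three in $D^\sigma(E)$. *)

(* Defs.v *)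
From mathcomp Require Import all_boot.
Set Implicit Arguments. Unset Strict Implicit. Unset Printing Implicit Defensive.

(* A simple graph on the finite vertex type T is a symmetric irreflexive
   relation e; e u v means {u,v} \in E.  An ordering sigma : V -> {1..p}
   is encoded as a bijection sigma : T -> 'I_#|T| (0-based), and
   ord1 sigma v := (sigma v).+1 is the 1-based position. *)

Definition ord1 (T : finType) (sigma : T -> 'I_#|T|) (v : T) : nat :=
  (sigma v).+1.

Fixpoint fill (T : finType) (e : rel T) (sigma : T -> 'I_#|T|) (i : nat)
  : rel T :=
  match i with
  | 0 => e
  | i'.+1 => fun u v =>
      fill e sigma i' u v ||
      [&& u != v, i < ord1 sigma u, i < ord1 sigma v &
          [exists w, [&& ord1 sigma w == i,
                         fill e sigma i' u w & fill e sigma i' v w]]]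
  end.

Definition Dfill (T : finType) (e : rel T) (sigma : T -> 'I_#|T|) : rel T :=
  fill e sigma (#|T| - 2).

Definition generalized_bartlett (T : finType) (e : rel T) : Prop :=
  exists sigma : T -> 'I_#|T|, bijective sigma /\
    ~ (exists u v w : T,
         [/\ ~~ e u v, ~~ e v w & ~~ e u w] /\
         [/\ Dfill e sigma u v, Dfill e sigma v w & Dfill e sigma u w]).

Definition induced (T : finType) (e : rel T) (A : {set T})
  : rel {x : T | x \in A} := fun x y => e (val x) (val y).

(* Main.v *)
Require Import Defs.
From mathcomp Require Import all_boot.
From mathcomp Require Import zify.

Lemma fill_mono (T : finType) (e : rel T) (s : T -> 'I_#|T|) i k u v :
  fill e s i u v -> i <= k -> fill e s k u v.
Proof.
move=> H; elim: k => [|k IH]; first by rewrite leqn0 => /eqP <-.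
rewrite leq_eqVlt => /orP [/eqP <- //|/IH {}IH] /=.
by rewrite IH.
Qed.

Lemma sim (T U : finType) (e : rel T) (f : U -> T) (finj : injective f)
  (sigma : T -> 'I_#|T|) (tau : U -> 'I_#|U|)
  (mono : forall a b, tau a < tau b -> sigma (f a) < sigma (f b)) :
  forall j x y, fill (fun x y => e (f x) (f y)) tau j x y ->
  forall k, (forall a, Defs.ord1 tau a <= j -> Defs.ord1 sigma (f a) <= k) ->
  fill e sigma k (f x) (f y).
Proof.
elim=> [|j IH] x y /= H k Hk; first by apply: (@fill_mono _ _ _ 0).
case/orP: H => [H|/and4P [nxy ltx lty /existsP [w /and3P [/eqP hw hxw hyw]]]].
  by apply: (IH _ _ H) => a ha; apply: Hk; apply: leq_trans ha _.
have hwk : Defs.ord1 sigma (f w) <= k by apply: Hk; rewrite hw.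
apply: (@fill_mono _ _ _ (Defs.ord1 sigma (f w))) => //.
rewrite /Defs.ord1 /=; apply/orP; right; apply/and4P; split.
- by rewrite (inj_eq finj).
- apply: mono; move: ltx hw; rewrite /Defs.ord1; lia.
- apply: mono; move: lty hw; rewrite /Defs.ord1; lia.
- apply/existsP; exists (f w); rewrite /Defs.ord1 eqxx /=.
  have HH : forall a, Defs.ord1 tau a <= j -> Defs.ord1 sigma (f a) <= sigma (f w).
    move=> a ha; rewrite /Defs.ord1; apply: mono; move: ha hw; rewrite /Defs.ord1; lia.
  by rewrite (IH _ _ hxw _ HH) (IH _ _ hyw _ HH).
Qed.

Theorem lemma11 (T : finType) (e : rel T)
  (e_sym : symmetric e) (e_irr : irreflexive e) (V' : {set T}) :
  generalized_bartlett e -> generalized_bartlett (@induced T e V').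
Proof.
move=> [sigma [sbij Hno]].
set U := ({x : T | x \in V'} : finType).
have sinj : injective sigma := bij_inj sbij.
pose S (a : U) := [set b : U | sigma (val b) < sigma (val a)].
have Slt : forall a, #|S a| < #|U|.
  move=> a; rewrite -cardsT; apply: proper_card; rewrite properT.
  apply/negP => /eqP H; have : a \in [set: U] by rewrite inE.
  by rewrite -H inE ltnn.
pose tau (a : U) : 'I_#|U| := Ordinal (Slt a).
have mono1 : forall a b, sigma (val a) < sigma (val b) -> tau a < tau b.
  move=> a b hab; rewrite /=; apply: proper_card; apply/properP; split.
    apply/subsetP => c; rewrite !inE => hc; exact: ltn_trans hc hab.
  by exists a; rewrite !inE ?ltnn.
have mono : forall a b, tau a < tau b -> sigma (val a) < sigma (val b).
  move=> a b hab; case: (ltngtP (sigma (val a)) (sigma (val b))) => // h.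
  - by have := mono1 _ _ h; rewrite ltnNge (ltnW hab).
  - have /val_inj E : val a = val b by apply: sinj; apply: val_inj.
    by move: hab; rewrite E ltnn.
have tinj : injective tau.
  move=> a b hab; case: (ltngtP (sigma (val a)) (sigma (val b))) => h.
  - by have := mono1 _ _ h; rewrite hab ltnn.
  - by have := mono1 _ _ h; rewrite hab ltnn.
  - by apply: val_inj; apply: sinj; apply: val_inj.
have tbij : bijective tau by apply: inj_card_bij => //; rewrite card_ord.
exists tau; split => //.
case: tbij => g gK Kg.
move=> [u [v [w [[nuv nvw nuw] [Duv Dvw Duw]]]]].
have Hk : forall a, Defs.ord1 tau a <= #|U| - 2 -> Defs.ord1 sigma (val a) <= #|T| - 2.
  move=> a ha; rewrite /Defs.ord1 in ha *.
  have h1 : #|U| - 2 < #|U| by move: ha; lia.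
  have h2 : #|U| - 1 < #|U| by move: ha; lia.
  pose b := g (Ordinal h1); pose c := g (Ordinal h2).
  have tb : nat_of_ord (tau b) = #|U| - 2 by rewrite /b Kg.
  have tc : nat_of_ord (tau c) = #|U| - 1 by rewrite /c Kg.
  have hab : sigma (val a) < sigma (val b) by apply: mono; rewrite tb; lia.
  have hbc : sigma (val b) < sigma (val c) by apply: mono; rewrite tb tc; lia.
  have := ltn_ord (sigma (val c)); lia.
apply: Hno; exists (val u), (val v), (val w); split; first by split.
by split; rewrite /Dfill; apply: (@sim _ _ _ _ val_inj _ _ mono (#|U| - 2)).
Qed.
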